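(* Let $A$ be a set, $\to$ a binary relation on $A$, $\vdash\!\dashv$ a symmetric relation on $A$ with $\sim=(\vdash\!\dashv)^*$, and $>$ a well-founded order on $A$ with $\sim\cdot>\cdot\sim\subseteq>$. If $(A,\to)$ is source decreasing modulo $\sim$ (with respect to $>$), then it is Church–Rosser modulo $\sim$, i.e. $(\leftarrow\cup\to\cup\sim)^*\subseteq\to^*\cdot\sim\cdot\leftarrow^*$.
   Context: Labeled steps: $b\to^{a} c$ means $b\to c$ and $b\sim a$; $b\vdash\!\dashv^{a}c$ means $b\vdash\!\dashv c$ and $b\sim a$; a step $c\leftarrow^a b$ means $b\to^a c$. For $a\in A$, $\Leftrightarrow_{\vee a}^*$ denotes the relation of pairs connected by a finite sequence of steps $\to^{a'}$, $\leftarrow^{a'}$, $\vdash\!\dashv^{a'}$, each with some label $a'<a$. $(A,\to)$ is source decreasing modulo $\sim$ if for all $a,b,c\in A$: (i) if $a\to b$ and $a\to c$ then $(b,c)\in\Leftrightarrow_{\vee a}^*$; (ii) if $a\to b$ and $a\vdash\!\dashv c$ then $(b,c)\in \Leftrightarrow_{\vee a}^*\cdot(\leftarrow^{a})^{=}$ (the last step being either empty or a step $d\leftarrow^a c$). *)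

(* Defs.v *)
From Stdlib Require Export Relations.Relation_Definitions Relations.Relation_Operators.

Section ARS.
Variable A : Type.
Variable R : A -> A -> Prop.
Variable E : A -> A -> Prop.
Variable gt : A -> A -> Prop.

Definition sim : A -> A -> Prop := clos_refl_trans A E.

Definition lstep (a b c : A) : Prop := R b c /\ sim b a.
Definition lconv (a b c : A) : Prop := E b c /\ sim b a.

Definition step_below (a x y : A) : Prop :=
  exists a', gt a a' /\ (lstep a' x y \/ lstep a' y x \/ lconv a' x y).

Definition conv_below (a : A) : A -> A -> Prop := clos_refl_trans A (step_below a).

Definition source_decreasing_modulo : Prop :=
  (forall a b c, R a b -> R a c -> conv_below a b c) /\
  (forall a b c, R a b -> E a c ->
     exists d, conv_below a b d /\ (d = c \/ lstep a c d)).

Definition church_rosser_modulo : Prop :=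
  forall x y,
    clos_refl_trans A (fun u v => R v u \/ R u v \/ sim u v) x y ->
    exists u v, clos_refl_trans A R x u /\ sim u v /\ clos_refl_trans A R y v.
End ARS.

(* Main.v *)
Require Import Defs.
From Stdlib Require Import List Relations Wellfounded.Transitive_Closure.
Import ListNotations.

Section Proof.
Variable A : Type.
Variables R E gt : A -> A -> Prop.
Hypothesis E_sym : forall x y, E x y -> E y x.
Hypothesis gt_wf : well_founded (fun x y => gt y x).
Hypothesis gt_compat : forall a b c d, sim A E a b -> gt b c -> sim A E c d -> gt a d.
Hypothesis hsd : source_decreasing_modulo A R E gt.

Let sm := sim A E.

Lemma sim_refl x : sm x x. Proof. apply rt_refl. Qed.
Lemma sim_sym x y : sm x y -> sm y x.
Proof. induction 1. apply rt_step; auto. apply rt_refl. eapply rt_trans; eauto. Qed.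
Lemma sim_trans x y z : sm x y -> sm y z -> sm x z.
Proof. apply rt_trans. Qed.

Definition eqv := Forall2 sm.
Lemma eqv_refl l : eqv l l. Proof. induction l; constructor; auto using sim_refl. Qed.
Lemma eqv_refl' l : Forall2 sm l l. Proof. apply eqv_refl. Qed.
#[local] Hint Resolve eqv_refl eqv_refl' sim_refl : core.
Lemma eqv_sym l l' : eqv l l' -> eqv l' l.
Proof. induction 1; constructor; auto using sim_sym. Qed.
Lemma eqv_trans l1 l2 l3 : eqv l1 l2 -> eqv l2 l3 -> eqv l1 l3.
Proof.
  intros H; revert l3; induction H; intros l3 H'; inversion H'; subst. constructor.
  constructor. eapply sim_trans; eauto. apply IHForall2; auto.
Qed.
Lemma eqv_app a b c d : eqv a b -> eqv c d -> eqv (a ++ c) (b ++ d).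
Proof. intros; apply Forall2_app; auto. Qed.

Definition red (l l' : list A) : Prop :=
  exists p a s m, l = p ++ a :: s /\ eqv l' (p ++ m ++ s) /\ Forall (gt a) m.
Definition smaller (l' l : list A) : Prop := red l l'.

Lemma acc_eqv l : Acc smaller l -> forall l', eqv l' l -> Acc smaller l'.
Proof.
  intros [H] l' Hq. constructor. intros N HN. apply H.
  destruct HN as (p' & a' & s' & m & -> & Hn & Hm).
  apply Forall2_app_inv_l in Hq as (p & r & Hp & Hr & ->).
  inversion Hr as [|? a ? s Ha Hs]; subst.
  exists p, a, s, m. split; [reflexivity|split].
  - eapply eqv_trans; [exact Hn|]. apply eqv_app; auto. apply eqv_app; auto using eqv_refl.
  - eapply Forall_impl; [|exact Hm]. intros x Hx.
    eapply gt_compat; [apply sim_sym; exact Ha|exact Hx|apply sim_refl].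
Qed.

Lemma acc_cons a : forall M, Acc smaller M -> Acc smaller (a :: M).
Proof.
  induction (gt_wf a) as [a _ IHa]. intros M HM.
  induction HM as [M HM IHM]. constructor. intros N HN.
  destruct HN as (p & b & s & m & Heq & Hn & Hm).
  destruct p as [|c p].
  - simpl in Heq. injection Heq as E1 E2; subst b s.
    apply (acc_eqv (m ++ M)); auto.
    clear Hn. induction Hm; simpl. constructor; auto.
    apply IHa; auto.
  - simpl in Heq. injection Heq as E1 E2; subst c M. simpl in Hn.
    inversion Hn as [|a' ? N' ? Ha' HN']; subst.
    apply (acc_eqv (a :: N')).
    + apply IHM. exists p, b, s, m. repeat split; auto.
    + constructor; auto.
Qed.

Lemma smaller_wf : well_founded smaller.
Proof.
  intro l; induction l.
  - constructor. intros N (p & a & s & m & Heq & _). destruct p; discriminate.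
  - apply acc_cons; auto.
Qed.

Definition lt := clos_trans _ smaller.
Lemma lt_wf : well_founded lt. Proof. apply wf_clos_trans, smaller_wf. Qed.

Lemma red_cons x l l' : red l l' -> red (x :: l) (x :: l').
Proof.
  intros (p & a & s & m & -> & Hn & Hm). exists (x :: p), a, s, m.
  repeat split; auto. constructor; auto using sim_refl.
Qed.
Lemma lt_cons x l l' : lt l' l -> lt (x :: l') (x :: l).
Proof. induction 1. apply t_step. apply red_cons; auto. eapply t_trans; eauto. Qed.

Definition le l' l := l' = l \/ lt l' l.
Lemma le_cons x l l' : le l' l -> le (x :: l') (x :: l).
Proof. intros [->|H]; [left; auto|right; apply lt_cons; auto]. Qed.
Lemma lt_le_lt a b c : lt a b -> le b c -> lt a c.
Proof. intros H [->|H']; auto. eapply t_trans; eauto. Qed.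

Lemma red_drop l : forall x, red (x :: l) l.
Proof. intros x. exists [], x, l, []. repeat split; simpl; auto using eqv_refl. Qed.

Inductive conv : A -> A -> list A -> Prop :=
| cnil x : conv x x []
| cfwd x y z l : R x y -> conv y z l -> conv x z (x :: l)
| cbwd x y z l : R y x -> conv y z l -> conv x z (y :: l)
| ceq x y z l : E x y -> conv y z l -> conv x z (x :: l).

Lemma conv_app x y z l1 l2 : conv x y l1 -> conv y z l2 -> conv x z (l1 ++ l2).
Proof. induction 1; intros; simpl; [auto|eapply cfwd|eapply cbwd|eapply ceq]; eauto. Qed.

Inductive bw : A -> A -> list A -> Prop :=
| bnil x : bw x x []
| bB x y z l : R y x -> bw y z l -> bw x z (y :: l).
Inductive md : A -> A -> list A -> Prop :=
| mB x z l : bw x z l -> md x z l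
| mE x y z l : E x y -> md y z l -> md x z (x :: l).
Inductive vl : A -> A -> list A -> Prop :=
| vM x z l : md x z l -> vl x z l
| vR x y z l : R x y -> vl y z l -> vl x z (x :: l).

Lemma bw_conv x z l : bw x z l -> conv x z l.
Proof. induction 1; [constructor|eapply cbwd; eauto]. Qed.
Lemma md_conv x z l : md x z l -> conv x z l.
Proof. induction 1; [apply bw_conv; auto|eapply ceq; eauto]. Qed.
Lemma vl_conv x z l : vl x z l -> conv x z l.
Proof. induction 1; [apply md_conv; auto|eapply cfwd; eauto]. Qed.

Lemma step_below_sym a x y : step_below A R E gt a x y -> step_below A R E gt a y x.
Proof.
  intros (a' & Hg & [H|[H|[He Hs]]]); exists a'; split; auto.
  right; right. split; auto. eapply sim_trans; [|exact Hs]. apply sim_sym, rt_step; auto.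
Qed.
Lemma cb_sym a x y : conv_below A R E gt a x y -> conv_below A R E gt a y x.
Proof.
  induction 1. apply rt_step, step_below_sym; auto. apply rt_refl. eapply rt_trans; eauto.
Qed.

Lemma gt_lab a a' x : gt a a' -> sm x a' -> gt a x.
Proof. intros. eapply gt_compat; [apply sim_refl|eauto|apply sim_sym; auto]. Qed.

Lemma cb_conv a x y : conv_below A R E gt a x y -> exists m, conv x y m /\ Forall (gt a) m.
Proof.
  induction 1 as [x y H| x | x y z _ [m1 [H1 F1]] _ [m2 [H2 F2]]].
  - destruct H as (a' & Hg & [[Hr Hs]|[[Hr Hs]|[He Hs]]]).
    + exists [x]. split. econstructor; eauto; constructor. constructor; eauto using gt_lab.
    + exists [y]. split. econstructor; eauto; constructor. constructor; eauto using gt_lab.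
    + exists [x]. split. eapply ceq; eauto; constructor. constructor; eauto using gt_lab.
  - exists []. split; constructor.
  - exists (m1 ++ m2). split. eapply conv_app; eauto. apply Forall_app; auto.
Qed.

Lemma main l : forall x z, conv x z l -> exists l2, le l2 l /\ vl x z l2.
Proof.
  induction l as [l IH] using (well_founded_induction lt_wf).
  intros x z H. destruct H as [x|x y z l' Hr Ht|x y z l' Hr Ht|x y z l' He Ht].
  - exists []. split. left; auto. do 3 constructor.
  - destruct (IH l' (t_step _ smaller _ _ (red_drop _ _)) _ _ Ht) as (l2 & Hle & Hv).
    exists (x :: l2). split. apply le_cons; auto. eapply vR; eauto.
  - destruct (IH l' (t_step _ smaller _ _ (red_drop _ _)) _ _ Ht) as (l2 & Hle & Hv).
    destruct Hv as [y z l2 Hm|y y1 z l3 Hr1 Hv].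
    + destruct Hm as [y z l2 Hb|y y1 z l3 He Hm].
      * exists (y :: l2). split. apply le_cons; auto. do 2 constructor. eapply bB; eauto.
      * (* x <- y |-| y1 *)
        destruct (proj2 hsd y x y1 Hr He) as (d & Hcb & Hd).
        destruct (cb_conv _ _ _ Hcb) as (m & Hc & Fm).
        assert (Hlt1 : lt (m ++ y :: l3) (y :: l')).
        { eapply lt_le_lt; [|apply le_cons; exact Hle]. apply t_step.
          exists [], y, (y :: l3), m. repeat split; auto using eqv_refl. }
        destruct Hd as [->|[Hr2 Hs]].
        -- assert (Hlt : lt (m ++ l3) (y :: l')).
           { eapply t_trans; [|exact Hlt1]. apply t_step.
             exists m, y, l3, []. repeat split; auto using eqv_refl. }
           destruct (IH _ Hlt x z) as (l4 & Hle4 & Hv4).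
           { eapply conv_app; eauto. apply md_conv; auto. }
           exists l4. split; auto. right. destruct Hle4 as [->|]; auto. eapply t_trans; eauto.
        -- assert (Hlt : lt (m ++ y1 :: l3) (y :: l')).
           { eapply lt_le_lt; [|apply le_cons; exact Hle]. apply t_step.
             exists [], y, (y :: l3), m. repeat split; auto.
             simpl. apply eqv_app. apply eqv_refl. constructor; auto. }
           destruct (IH _ Hlt x z) as (l4 & Hle4 & Hv4).
           { eapply conv_app; eauto. eapply cbwd; eauto. apply md_conv; auto. }
           exists l4. split; auto. right. destruct Hle4 as [->|]; auto. eapply t_trans; eauto.
    + (* x <- y -> y1 *)
      pose proof (proj1 hsd y x y1 Hr Hr1) as Hcb.
      destruct (cb_conv _ _ _ Hcb) as (m & Hc & Fm).
      assert (Hlt : lt (m ++ l3) (y :: l')).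
      { eapply lt_le_lt; [|apply le_cons; exact Hle].
        eapply t_trans; apply t_step.
        - exists m, y, l3, []. repeat split; auto using eqv_refl.
        - exists [], y, (y :: l3), m. repeat split; auto using eqv_refl. }
      destruct (IH _ Hlt x z) as (l4 & Hle4 & Hv4).
      { eapply conv_app; eauto. apply vl_conv; auto. }
      exists l4. split; auto. right. destruct Hle4 as [->|]; auto. eapply t_trans; eauto.
  - destruct (IH l' (t_step _ smaller _ _ (red_drop _ _)) _ _ Ht) as (l2 & Hle & Hv).
    destruct Hv as [y z l2 Hm|y y1 z l3 Hr1 Hv].
    + exists (x :: l2). split. apply le_cons; auto. constructor. eapply mE; eauto.
    + (* x |-| y -> y1 *)
      destruct (proj2 hsd y y1 x Hr1 (E_sym _ _ He)) as (d & Hcb & Hd).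
      destruct (cb_conv _ _ _ (cb_sym _ _ _ Hcb)) as (m & Hc & Fm).
      assert (Hlt1 : lt (x :: m ++ l3) (x :: l')).
      { eapply lt_le_lt; [|apply le_cons; exact Hle]. apply t_step. apply red_cons.
        exists [], y, l3, m. repeat split; auto using eqv_refl. }
      destruct Hd as [->|[Hr2 Hs]].
      * assert (Hlt : lt (m ++ l3) (x :: l')).
        { eapply t_trans; [|exact Hlt1]. apply t_step. apply red_drop. }
        destruct (IH _ Hlt x z) as (l4 & Hle4 & Hv4).
        { eapply conv_app; eauto. apply vl_conv; auto. }
        exists l4. split; auto. right. destruct Hle4 as [->|]; auto. eapply t_trans; eauto.
      * destruct (IH _ Hlt1 x z) as (l4 & Hle4 & Hv4).
        { eapply cfwd; eauto. eapply conv_app; eauto. apply vl_conv; auto. }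
        exists l4. split; auto. right. destruct Hle4 as [->|]; auto. eapply t_trans; eauto.
Qed.

Lemma bw_rt x z l : bw x z l -> clos_refl_trans A R z x.
Proof. induction 1. apply rt_refl. eapply rt_trans; eauto. apply rt_step; auto. Qed.
Lemma md_rt x z l : md x z l -> exists v, sm x v /\ clos_refl_trans A R z v.
Proof.
  induction 1. exists x; split; [apply sim_refl|eapply bw_rt; eauto].
  destruct IHmd as (v & Hs & Hr). exists v; split; auto.
  eapply sim_trans; [apply rt_step; eauto|auto].
Qed.
Lemma vl_rt x z l : vl x z l -> exists u v, clos_refl_trans A R x u /\ sm u v /\ clos_refl_trans A R z v.
Proof.
  induction 1.
  - destruct (md_rt _ _ _ H) as (v & ? & ?). exists x, v; repeat split; auto. apply rt_refl.
  - destruct IHvl as (u & v & ? & ? & ?). exists u, v; repeat split; auto.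
    eapply rt_trans; [apply rt_step|]; eauto.
Qed.

Lemma sim_conv x y : sm x y -> exists l, conv x y l.
Proof.
  induction 1. exists [x]. econstructor; eauto; constructor. exists []; constructor.
  destruct IHclos_refl_trans1 as [l1 ?], IHclos_refl_trans2 as [l2 ?].
  exists (l1 ++ l2); eapply conv_app; eauto.
Qed.

Lemma cr : church_rosser_modulo A R E.
Proof.
  intros x y H.
  assert (exists l, conv x y l) as [l Hc].
  { induction H as [u v [H|[H|H]]| |].
    - exists [v]. eapply cbwd; eauto; constructor.
    - exists [u]. eapply cfwd; eauto; constructor.
    - apply sim_conv; auto.
    - exists []; constructor.
    - destruct IHclos_refl_trans1 as [l1 ?], IHclos_refl_trans2 as [l2 ?].
      exists (l1 ++ l2); eapply conv_app; eauto. }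
  destruct (main _ _ _ Hc) as (l2 & _ & Hv). apply (vl_rt _ _ _ Hv).
Qed.
End Proof.

Theorem corollary3p9 (A : Type) (R E gt : A -> A -> Prop)
  (E_sym : forall x y, E x y -> E y x)
  (gt_trans : forall x y z, gt x y -> gt y z -> gt x z)
  (gt_wf : well_founded (fun x y => gt y x))
  (gt_compat : forall a b c d, sim A E a b -> gt b c -> sim A E c d -> gt a d)
  (hsd : source_decreasing_modulo A R E gt) :
  church_rosser_modulo A R E.
Proof. exact (cr A R E gt E_sym gt_wf gt_compat hsd). Qed.
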